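(* Let $f\in\mathbb{Q}[[y,z]]$ be the formal power series $$f=\frac{(1-y-z)-\sqrt{(1-y-z)^2-4yz}}{2},$$ which is the unique formal power series with zero constant term satisfying $f=(y+f)(z+f)$. Then for all integers $n\ge 1$, $0\le r\le n$ and $k\ge 0$, the number $N_k^{n,r}$ equals the coefficient of $y^r z^{n-r}$ in $(y+z+2f)^{k+1}$.
   Context: A lattice path from $(0,0)$ to $(r,n-r)$ (with integers $n\ge 1$, $0\le r\le n$) is a sequence of lattice points $v_0=(0,0),v_1,\dots,v_n=(r,n-r)$ with each step $v_i-v_{i-1}\in\{(1,0),(0,1)\}$ (an E step or an N step); its vertex set is $\{v_0,\dots,v_n\}$. For $k\ge 0$, $N_k^{n,r}$ denotes the number of ordered pairs $(P,Q)$ of lattice paths from $(0,0)$ to $(r,n-r)$ such that the intersection of their vertex sets, with the two points $(0,0)$ and $(r,n-r)$ removed, has exactly $k$ elements. The square root is the formal power series square root with constant term $1$. *)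

(* Defs.v *)
From mathcomp Require Import all_boot all_order all_algebra.
Set Implicit Arguments. Unset Strict Implicit. Unset Printing Implicit Defensive.
Import GRing.Theory.
Local Open Scope ring_scope.

(* A lattice path with n steps is encoded by its step sequence s : n.-tuple bool,
   true = E step (1,0), false = N step (0,1).  It ends at (r, n-r) iff it has
   exactly r E steps. *)
Definition vertex (s : seq bool) (i : nat) : nat * nat :=
  (count id (take i s), count negb (take i s)).

Definition vertices (s : seq bool) : seq (nat * nat) :=
  [seq vertex s i | i <- iota 0 (size s).+1].

Definition common_interior (n r : nat) (P Q : seq bool) : seq (nat * nat) :=
  [seq v <- undup (vertices P) |
     [&& v \in vertices Q, v != (0%N, 0%N) & v != (r, (n - r)%N)]].

Definition is_path_to (n r : nat) (P : n.-tuple bool) : bool := count id P == r.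

Definition Nk (k n r : nat) : nat :=
  #|[set PQ : n.-tuple bool * n.-tuple bool |
      [&& is_path_to r PQ.1, is_path_to r PQ.2 &
          size (common_interior n r PQ.1 PQ.2) == k]]|.

(* a : fps represents sum_{i,j} a i j y^i z^j *)
Definition fps := nat -> nat -> rat.

Definition fps_add (a b : fps) : fps := fun i j => a i j + b i j.
Definition fps_sub (a b : fps) : fps := fun i j => a i j - b i j.
Definition fps_scale (c : rat) (a : fps) : fps := fun i j => c * a i j.
Definition fps_mul (a b : fps) : fps := fun i j =>
  \sum_(p < i.+1) \sum_(q < j.+1) a p q * b (i - p)%N (j - q)%N.
Definition fps_one : fps := fun i j => if (i == 0%N) && (j == 0%N) then 1 else 0.
Definition fps_y : fps := fun i j => if (i == 1%N) && (j == 0%N) then 1 else 0.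
Definition fps_z : fps := fun i j => if (i == 0%N) && (j == 1%N) then 1 else 0.
Definition fps_pow (a : fps) (m : nat) : fps := iter m (fps_mul a) fps_one.

Definition fps_L : fps := fps_sub (fps_sub fps_one fps_y) fps_z.
Definition fps_disc : fps :=
  fps_sub (fps_mul fps_L fps_L) (fps_scale 4 (fps_mul fps_y fps_z)).

(* Main.v *)
Require Import Defs.
From mathcomp Require Import all_boot all_order all_algebra.
From mathcomp Require Import zify ring lra.
Import GRing.Theory.

Fixpoint seqs n : seq (seq bool) :=
  if n is n'.+1 then [seq rcons s a | s <- seqs n', a <- [:: true; false]]
  else [:: [::]].

Lemma mem_seqs n s : (s \in seqs n) = (size s == n).
Proof.
elim: n s => [|n IH] s.
  by rewrite /= inE; case: s.
rewrite [seqs _]/=.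
apply/flatten_mapP/idP => [[s' hs]|].
  by rewrite !inE => /orP [] /eqP ->; rewrite size_rcons; move: hs; rewrite IH => /eqP ->.
case/lastP: s => [//|s a]; rewrite size_rcons eqSS => h.
by exists s; rewrite ?IH // !inE; case: a; rewrite eqxx ?orbT.
Qed.

Lemma uniq_seqs n : uniq (seqs n).
Proof.
elim: n => [//|n IH].
change (uniq [seq rcons x y | x <- seqs n, y <- [:: true; false]]).
apply: allpairs_uniq => //.
by move=> [s a] [t b] _ _ /= /rcons_inj.
Qed.

Lemma big_seqs_S (F : seq bool -> nat) n :
  \sum_(s <- seqs n.+1) F s = \sum_(s <- seqs n) (F (rcons s true) + F (rcons s false)).
Proof.
change (\sum_(s <- [seq rcons x y | x <- seqs n, y <- [:: true; false]]) F s =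
  \sum_(s <- seqs n) (F (rcons s true) + F (rcons s false))).
rewrite big_allpairs_dep; apply: eq_bigr => s _.
by rewrite big_cons big_cons big_nil /= addn0.
Qed.

Definition zeros (P Q : seq bool) : nat :=
  count (fun i => count id (take i P) == count id (take i Q)) (iota 1 (size P)).

Lemma count_rcons (P : seq bool) (a : bool) : count id (rcons P a) = count id P + a.
Proof. by rewrite -cats1 count_cat /= addn0. Qed.

Lemma zeros_rcons P Q a b : size P = size Q ->
  zeros (rcons P a) (rcons Q b) =
  zeros P Q + (count id (rcons P a) == count id (rcons Q b)).
Proof.
move=> hs; rewrite /zeros size_rcons -[(size P).+1]addn1 iotaD count_cat /= addn0 add1n.
congr (_ + _).
  apply: eq_in_count => i; rewrite mem_iota => /andP [_ hi].
  by rewrite -!cats1 !takel_cat // -hs; lia.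
by rewrite !take_oversize ?size_rcons // hs.
Qed.

Definition cc m r s k : nat :=
  \sum_(P <- seqs m) \sum_(Q <- seqs m)
     ((count id P == r) && (count id Q == s) && (zeros P Q == k)).

Lemma zerosC P Q : size P = size Q -> zeros P Q = zeros Q P.
Proof.
move=> h; rewrite /zeros h; apply: eq_count => i /=; by rewrite eq_sym.
Qed.

Lemma cc_sym m r s k : cc m r s k = cc m s r k.
Proof.
rewrite /cc exchange_big /=; apply: eq_big_seq => Q hQ; apply: eq_big_seq => P hP.
rewrite zerosC; last by move: hP hQ; rewrite !mem_seqs => /eqP -> /eqP ->.
by rewrite [(count id P == r) && _]andbC.
Qed.

Lemma count_le (P : seq bool) : (count id P <= size P)%N.
Proof. exact: count_size. Qed.

Lemma cc_gt m r s k : (m < r)%N -> cc m r s k = 0%N.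
Proof.
move=> h; rewrite /cc big_seq big1 // => P hP; rewrite big1 // => Q _.
have := count_le P; move: hP; rewrite mem_seqs => /eqP ->.
case: eqP => //; lia.
Qed.

Lemma cc0 r s k : cc 0 r s k = ((r == 0) && (s == 0) && (k == 0))%N.
Proof.
by rewrite /cc /= !big_cons !big_nil /= /zeros /= !addn0 ![0%N == _]eq_sym.
Qed.

Lemma cc_term m r s k (a b : bool) :
  \sum_(P <- seqs m) \sum_(Q <- seqs m)
    ((count id (rcons P a) == r) && (count id (rcons Q b) == s) &&
      (zeros (rcons P a) (rcons Q b) == k))
  = if [&& (a <= r)%N, (b <= s)%N & ((r == s) <= k)%N]
    then cc m (r - a) (s - b) (k - (r == s)) else 0%N.
Proof.
case: ifP => hc.
  rewrite /cc; apply: eq_big_seq => P hP; apply: eq_big_seq => Q hQ.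
  rewrite zeros_rcons; last by move: hP hQ; rewrite !mem_seqs => /eqP -> /eqP ->.
  rewrite !count_rcons; move: (count id P) (count id Q) (zeros P Q) hc => x y z.
  by case: a; case: b; case: (r =P s); do ![case: eqP => /= ?] => //; lia.
rewrite big_seq big1 // => P hP; rewrite big_seq big1 // => Q hQ.
rewrite zeros_rcons; last by move: hP hQ; rewrite !mem_seqs => /eqP -> /eqP ->.
rewrite !count_rcons; move: (count id P) (count id Q) (zeros P Q) hc => x y z.
by case: a; case: b; case: (r =P s); do ![case: eqP => /= ?] => //; lia.
Qed.

Lemma cc_rec m r s k : cc m.+1 r s k =
  \sum_(a <- [:: true; false]) \sum_(b <- [:: true; false])
     (if [&& (a <= r)%N, (b <= s)%N & ((r == s) <= k)%N]
      then cc m (r - a) (s - b) (k - (r == s)) else 0%N).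
Proof.
rewrite {1}/cc big_seqs_S.
under eq_bigr => P _ do rewrite !big_seqs_S !big_split.
rewrite !big_split /= !cc_term.
by rewrite !big_cons !big_nil /= !addn0 !addnA.
Qed.

Lemma cc_rec' m r s k : cc m.+1 r s k =
  if (r == s) && (k == 0%N) then 0%N else
  ((if (0 < r)%N && (0 < s)%N then cc m r.-1 s.-1 (k - (r == s)) else 0) +
   (if (0 < r)%N then cc m r.-1 s (k - (r == s)) else 0) +
   (if (0 < s)%N then cc m r s.-1 (k - (r == s)) else 0) +
   cc m r s (k - (r == s)))%N.
Proof.
rewrite cc_rec !big_cons !big_nil /= !addn0 !subn0.
have hk : ((r == s) <= k)%N = ~~ ((r == s) && (k == 0%N)).
  by case: (r == s); case: k.
rewrite hk {hk}; case: ((r == s) && (k == 0%N)) => /=; first by rewrite !andbF.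
rewrite !andbT -!subn1; case: r => [|r]; case: s => [|s] //=; rewrite ?addn0 ?add0n //.
by rewrite addnA.
Qed.

Section DPart.
Set Implicit Arguments. Unset Strict Implicit.


Lemma sum_tuple n (G : seq bool -> nat) :
  \sum_(t : n.-tuple bool) G (val t) = \sum_(s <- seqs n) G s.
Proof.
change (\sum_(t <- index_enum (n.-tuple bool)) G (val t) = \sum_(s <- seqs n) G s).
rewrite -(big_map val xpredT G); apply: perm_big; apply: uniq_perm.
- by rewrite map_inj_uniq ?index_enum_uniq //; apply: val_inj.
- exact: uniq_seqs.
move=> s; rewrite mem_seqs; apply/mapP/idP => [[t _ ->]|hs].
  by rewrite size_tuple.
by exists (Tuple hs); rewrite ?mem_index_enum.
Qed.

Lemma vsum (s : seq bool) i : (i <= size s)%N ->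
  ((vertex s i).1 + (vertex s i).2)%N = i.
Proof.
move=> h; rewrite /vertex /=.
by have := count_predC id (take i s); rewrite size_takel //.
Qed.

Lemma vertex_full (P : seq bool) m r : size P = m -> count id P = r ->
  vertex P m = (r, (m - r)%N).
Proof.
move=> hP cP; rewrite /vertex take_oversize ?hP // cP.
have := count_predC id P; rewrite hP (@eq_count _ (predC id) negb) // cP.
by move=> <-; rewrite addKn.
Qed.

Lemma mem_vertices (P Q : seq bool) i : size P = size Q -> (i <= size P)%N ->
  (vertex P i \in vertices Q) = (count id (take i P) == count id (take i Q)).
Proof.
move=> hs hiP; have hiQ : (i <= size Q)%N by rewrite -hs.
apply/mapP/eqP => [[j hj hv]|he].
  move: hj; rewrite mem_iota add0n => /andP [_ hj].
  have hjQ : (j <= size Q)%N by lia.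
  have := vsum hiP; have := vsum hjQ; rewrite hv => -> ij.
  by move: hv; rewrite ij /vertex => -[].
exists i; first by rewrite mem_iota; lia.
have := vsum hiP; have := vsum hiQ; rewrite /vertex /= he => h1 h2.
by congr (_, _); lia.
Qed.

Lemma ci_size m r (P Q : seq bool) : size P = m.+1 -> size Q = m.+1 ->
  count id P = r -> count id Q = r ->
  (size (common_interior m.+1 r P Q)).+1 = zeros P Q.
Proof.
move=> hP hQ cP cQ.
set e := fun i => count id (take i P) == count id (take i Q).
have hu : uniq (vertices P).
  rewrite /vertices map_inj_in_uniq ?iota_uniq // => i j.
  rewrite !mem_iota !add0n => /andP [_ hi] /andP [_ hj] hv.
  by rewrite -(vsum hi) -(vsum hj) hv.
rewrite /common_interior size_filter undup_id // /vertices count_map hP.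
have hpt : {in iota 0 m.+2, preim (vertex P) (fun v =>
    [&& v \in vertices Q, v != (0%N, 0%N) & v != (r, (m.+1 - r)%N)])
      =1 (fun i => (0 < i < m.+1)%N && e i)}.
  move=> i; rewrite mem_iota add0n => /andP [_ hi] /=.
  have hiP : (i <= size P)%N by rewrite hP.
  rewrite mem_vertices ?hP ?hQ //.
  case: (ltnP 0 i) => h0; last first.
    have -> : i = 0%N by lia.
    by rewrite /vertex take0 /= andbF.
  case: (ltnP i m.+1) => h1; last first.
    have -> : i = m.+1 by lia.
    by rewrite (vertex_full hP cP) eqxx !andbF.
  have -> : (vertex P i != (0%N, 0%N)).
    apply/eqP => h; have := vsum hiP; rewrite h /=; lia.
  have -> : (vertex P i != (r, (m.+1 - r)%N)).
    apply/eqP => h; have := vsum hiP; rewrite h /=; lia.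
  by rewrite /e; case: (count id (take i P) == _).
rewrite (eq_in_count hpt).
have hi : iota 1 m.+1 = rcons (iota 1 m) m.+1.
  by rewrite -cats1 -(addn1 m) iotaD /= addnC.
have -> : iota 0 m.+2 = 0%N :: iota 1 m.+1 by [].
rewrite /zeros hP hi -!cats1 !count_cat /=.
rewrite (count_cat _ (iota 1 m)) /= ltnn /= !addn0 add0n.
have -> : count id (take m.+1 P) == count id (take m.+1 Q) by rewrite !take_oversize ?hP ?hQ // cP cQ.
rewrite addn1; congr (_.+1); apply: eq_in_count => i.
by rewrite mem_iota => /andP [h1 h2] /=; have -> : (0 < i < m.+1)%N by lia.
Qed.

Lemma Nk_cc k n r : (1 <= n)%N -> Nk k n r = cc n r r k.+1.
Proof.
case: n => [//|m] _.
set F := fun P Q : seq bool =>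
  ((count id P == r) && (count id Q == r) &&
   (size (common_interior m.+1 r P Q) == k) : nat).
have -> : Nk k m.+1 r = \sum_(P : m.+1.-tuple bool) \sum_(Q : m.+1.-tuple bool) F (val P) (val Q).
  rewrite /Nk cardsE -sum1_card big_mkcond /= pair_bigA /=.
  apply: eq_bigr => -[P Q] _; rewrite /F /is_path_to unfold_in /= andbA.
  by case: (_ && _ && _).
rewrite (eq_bigr (fun P : m.+1.-tuple bool => \sum_(s <- seqs m.+1) F (val P) s)); last first.
  by move=> P _; rewrite (sum_tuple _ (F (val P))).
rewrite (sum_tuple _ (fun P => \sum_(s <- seqs m.+1) F P s)).
rewrite /cc; apply: eq_big_seq => P hP; apply: eq_big_seq => Q hQ.
move: hP hQ; rewrite !mem_seqs => /eqP hP /eqP hQ.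
rewrite /F; case: (count id P =P r) => cP //=; case: (count id Q =P r) => cQ //=.
by rewrite -(ci_size hP hQ cP cQ) eqSS.
Qed.

End DPart.
Unset Implicit Arguments. Set Strict Implicit.

Local Open Scope ring_scope.

Definition cz (p : {poly {poly rat}}) : fps := fun i j => p`_j`_i.

Lemma cz_mul p q i j : cz (p * q) i j = fps_mul (cz p) (cz q) i j.
Proof.
rewrite /cz /fps_mul coefM coef_sum.
under eq_bigr do rewrite coefM.
by rewrite exchange_big.
Qed.

Lemma cz_add p q i j : cz (p + q) i j = cz p i j + cz q i j.
Proof. by rewrite /cz !coefD. Qed.
Lemma cz_sub p q i j : cz (p - q) i j = cz p i j - cz q i j.
Proof. by rewrite /cz !coefB. Qed.

Definition Yv : {poly {poly rat}} := ('X)%:P.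
Definition Zv : {poly {poly rat}} := 'X.

Lemma czY i j : cz Yv i j = fps_y i j.
Proof.
rewrite /cz /Yv /fps_y coefC; case: j => [|j] /=; last by rewrite coef0 andbF.
by rewrite coefX andbT; case: (i == 1%N).
Qed.
Lemma czZ i j : cz Zv i j = fps_z i j.
Proof.
rewrite /cz /Zv /fps_z coefX; case: j => [|[|j]] /=; rewrite ?coef0 ?andbF //.
by rewrite coef1 andbT; case: (i == 0%N).
Qed.
Lemma cz1 i j : cz 1 i j = fps_one i j.
Proof.
rewrite /cz /fps_one coef1; case: j => [|j] /=; last by rewrite coef0 andbF.
by rewrite coef1 andbT; case: (i == 0%N).
Qed.
Lemma czC (c : rat) p i j : cz (c%:P%:P * p) i j = c * cz p i j.
Proof. by rewrite /cz coefCM coefCM. Qed.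

Lemma czYM p i j : cz (Yv * p) i j = if i is i'.+1 then cz p i' j else 0.
Proof. by rewrite /cz /Yv coefCM coefXM; case: i. Qed.
Lemma czZM p i j : cz (Zv * p) i j = if j is j'.+1 then cz p i j' else 0.
Proof. by rewrite /cz /Zv coefXM; case: j => [|j] //=; rewrite coef0. Qed.

Section Trunc.
Variable N : nat.
Definition inI (p : {poly {poly rat}}) :=
  forall i j, (i < N)%N -> (j < N)%N -> cz p i j = 0.

Lemma inID p q : inI p -> inI q -> inI (p + q).
Proof. by move=> hp hq i j hi hj; rewrite cz_add hp ?hq ?addr0. Qed.
Lemma inIB p q : inI p -> inI q -> inI (p - q).
Proof. by move=> hp hq i j hi hj; rewrite cz_sub hp ?hq ?subr0. Qed.
Lemma inIM q p : inI p -> inI (q * p).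
Proof.
move=> hp i j hi hj; rewrite cz_mul /fps_mul big1 // => a _.
rewrite big1 // => b _; rewrite hp ?mulr0 //.
  by apply: leq_ltn_trans hi; apply: leq_subr.
by apply: leq_ltn_trans hj; apply: leq_subr.
Qed.
Lemma inIMr q p : inI p -> inI (p * q).
Proof. by move=> h; rewrite mulrC; apply: inIM. Qed.
Lemma inI_cz p q i j : inI (p - q) -> (i < N)%N -> (j < N)%N -> cz p i j = cz q i j.
Proof. by move=> h hi hj; apply/eqP; rewrite -subr_eq0 -cz_sub h. Qed.

Definition tr (a : fps) : {poly {poly rat}} := \poly_(j < N) \poly_(i < N) a i j.
Lemma cz_tr a i j : (i < N)%N -> (j < N)%N -> cz (tr a) i j = a i j.
Proof. by move=> hi hj; rewrite /cz /tr coef_poly hj coef_poly hi. Qed.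
End Trunc.

Lemma fps_mul_ext a a' b b' i j :
  (forall p q, (p <= i)%N -> (q <= j)%N -> a p q = a' p q /\ b p q = b' p q) ->
  fps_mul a b i j = fps_mul a' b' i j.
Proof.
move=> h; apply: eq_bigr => p _; apply: eq_bigr => q _.
have hp : (p <= i)%N by rewrite -ltnS.
have hq : (q <= j)%N by rewrite -ltnS.
have [-> _] := h p q hp hq.
by have [_ ->] := h (i - p)%N (j - q)%N (leq_subr _ _) (leq_subr _ _).
Qed.

Lemma czNM (n : nat) p i j : cz (n%:R * p) i j = n%:R * cz p i j.
Proof.
have -> : (n%:R : {poly {poly rat}}) = (n%:R : rat)%:P%:P by rewrite !polyC_natr.
by rewrite czC.
Qed.

Lemma inIN N p : inI N p -> inI N (- p).
Proof. by move=> h i j hi hj; rewrite -sub0r cz_sub h // /cz coef0 coef0 subr0. Qed.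

Definition Lp : {poly {poly rat}} := 1 - Yv - Zv.
Lemma czL i j : cz Lp i j = fps_L i j.
Proof. by rewrite /Lp !cz_sub cz1 czY czZ. Qed.

Section Alg.
Variable N : nat.
Variable g : fps.
Hypothesis hg0 : g 0%N 0%N = 1.
Hypothesis hg : forall i j, fps_mul g g i j = fps_disc i j.
Let f : fps := fps_scale (1 / 2) (fps_sub fps_L g).
Definition FF := tr N f.
Let G := tr N g.
Let D : {poly {poly rat}} := Lp * Lp - 4%:R * (Yv * Zv).

Lemma czD i j : cz D i j = fps_disc i j.
Proof.
rewrite /D cz_sub czNM cz_mul cz_mul /fps_disc /fps_sub /fps_scale.
congr (_ - _ * _).
  by apply: fps_mul_ext => p q _ _; rewrite !czL.
by apply: fps_mul_ext => p q _ _; rewrite czY czZ.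
Qed.

Lemma inI_GG : inI N (G * G - D).
Proof.
move=> i j hi hj; rewrite cz_sub czD cz_mul -hg; apply/eqP; rewrite subr_eq0; apply/eqP.
apply: fps_mul_ext => p q hp hq; rewrite /G !cz_tr //;
  by apply: leq_ltn_trans; eassumption.
Qed.

Lemma inI_G : inI N (G - (Lp - 2%:R * FF)).
Proof.
move=> i j hi hj; rewrite !cz_sub czNM /FF /G !cz_tr //.
by rewrite cz1 czY czZ /f /fps_scale /fps_sub /fps_L /fps_sub; field.
Qed.

Definition Qc := FF - ((Yv + Zv) * FF + Yv * Zv + FF * FF).

Lemma inI_Qc : inI N Qc.
Proof.
have h4 : 4%:R * Qc = - ((G * G - D) - (G - (Lp - 2%:R * FF)) * (G + (Lp - 2%:R * FF))).
  by rewrite /Qc /D /Lp; ring.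
move=> i j hi hj.
have : cz (4%:R * Qc) i j = 0.
  rewrite h4; apply: (inIN N) => //.
  by apply: inIB; [apply: inI_GG | apply: inIMr; apply: inI_G].
by rewrite czNM => /eqP; rewrite mulf_eq0 => /orP [|/eqP //].
Qed.

Lemma FF00 : (0 < N)%N -> cz FF 0 0 = 0.
Proof.
move=> hN; rewrite /FF cz_tr // /f /fps_scale /fps_sub /fps_L /fps_sub hg0.
by rewrite /fps_one /fps_y /fps_z /=; field.
Qed.

Lemma F0j j : (j < N)%N -> cz FF 0 j = 0.
Proof.
elim/ltn_ind: j => j IH hj.
have hN : (0 < N)%N by apply: leq_ltn_trans hj.
case: j IH hj => [|j'] IH hj; first exact: FF00.
have hQ := inI_Qc 0 _ hN hj.
rewrite /Qc !cz_sub !cz_add mulrDl cz_add czYM czZM czYM /= (IH j' (ltnSn _) (ltnW hj)) in hQ.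
rewrite cz_mul /fps_mul big_ord1 big1 in hQ; first by move: hQ; rewrite !(addr0, add0r, subr0).
move=> q _ /=; have hq := ltn_ord q.
case: (ltnP q j'.+1) => h; first by rewrite (IH q h) ?mul0r //; lia.
have -> : (j'.+1 - q = 0)%N by lia.
by rewrite FF00 // mulr0.
Qed.

Lemma Fi0 i : (i < N)%N -> cz FF i 0 = 0.
Proof.
elim/ltn_ind: i => i IH hi.
have hN : (0 < N)%N by apply: leq_ltn_trans hi.
case: i IH hi => [|i'] IH hi; first exact: FF00.
have hQ := inI_Qc _ 0 hi hN.
rewrite /Qc !cz_sub !cz_add mulrDl cz_add czYM czZM czYM /= (IH i' (ltnSn _) (ltnW hi)) czZ in hQ.
rewrite cz_mul /fps_mul big1 in hQ; first by move: hQ; rewrite /fps_z andbF !(addr0, add0r, subr0).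
move=> p _; rewrite big_ord1 /=; have hp := ltn_ord p.
case: (ltnP p i'.+1) => h; first by rewrite (IH p h) ?mul0r //; lia.
have -> : (i'.+1 - p = 0)%N by lia.
by rewrite FF00 // mulr0.
Qed.
End Alg.

Section Vanish.
Variable N : nat.
Definition Vy p d := forall i j, (i < N)%N -> (j < N)%N -> (i < d)%N -> cz p i j = 0.
Definition Vz p d := forall i j, (i < N)%N -> (j < N)%N -> (j < d)%N -> cz p i j = 0.

Lemma Vy_mul p q a b : Vy p a -> Vy q b -> Vy (p * q) (a + b).
Proof.
move=> hp hq i j hi hj hd; rewrite cz_mul /fps_mul big1 // => l _; rewrite big1 // => k _.
have hl := ltn_ord l; have hk := ltn_ord k.
case: (ltnP l a) => h.
  by rewrite hp ?mul0r //; lia.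
by rewrite hq ?mulr0 //; lia.
Qed.

Lemma Vz_mul p q a b : Vz p a -> Vz q b -> Vz (p * q) (a + b).
Proof.
move=> hp hq i j hi hj hd; rewrite cz_mul /fps_mul big1 // => l _; rewrite big1 // => k _.
have hl := ltn_ord l; have hk := ltn_ord k.
case: (ltnP k a) => h.
  by rewrite hp ?mul0r //; lia.
by rewrite hq ?mulr0 //; lia.
Qed.

Lemma Vy_pow p W d : Vy p 1 -> Vy (p ^+ d * W) d.
Proof.
move=> h1; elim: d => [|d IH]; first by move=> i j _ _.
rewrite exprS -mulrA; by have := Vy_mul _ _ _ _ h1 IH; rewrite add1n.
Qed.
Lemma Vz_pow p W d : Vz p 1 -> Vz (p ^+ d * W) d.
Proof.
move=> h1; elim: d => [|d IH]; first by move=> i j _ _.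
rewrite exprS -mulrA; by have := Vz_mul _ _ _ _ h1 IH; rewrite add1n.
Qed.
End Vanish.


Lemma cz1E i j : cz 1 i j = ((i == 0%N) && (j == 0%N))%:R.
Proof. by rewrite cz1 /fps_one; case: (_ && _). Qed.

Section Main.
Variable N : nat.
Variable g : fps.
Hypothesis hg0 : g 0%N 0%N = 1.
Hypothesis hg : forall i j, fps_mul g g i j = fps_disc i j.
Let F := FF N g.
Definition PP := Yv + Zv + 2%:R * F.
Definition cfe k d i j := cz (PP ^+ k * F ^+ d) i j.
Definition cf m r s k := cfe k (maxn r s - minn r s) (maxn r s) (m - minn r s).

Lemma cfeE k d d' i i' j j' : d = d' -> i = i' -> j = j' -> cfe k d i j = cfe k d' i' j'.
Proof. by move=> -> -> ->. Qed.

Lemma cf_ge m r s k : (s <= r)%N -> cf m r s k = cfe k (r - s) r (m - s).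
Proof. by move=> h; rewrite /cf (maxn_idPl h) (minn_idPr h). Qed.

Lemma cf_sym m r s k : cf m r s k = cf m s r k.
Proof. by rewrite /cf maxnC minnC. Qed.

Lemma cfe_y k d i j : (i < N)%N -> (j < N)%N -> (i < d)%N -> cfe k d i j = 0.
Proof.
move=> hi hj hd; rewrite /cfe mulrC.
have hv : Vy N F 1.
  move=> i' j' hi' hj' h1; have -> : i' = 0%N by lia.
  by apply: (F0j N g hg0 hg).
exact: (Vy_pow N F (PP ^+ k) d hv i j hi hj hd).
Qed.

Lemma cfe_z k d i j : (i < N)%N -> (j < N)%N -> (j < d)%N -> cfe k d i j = 0.
Proof.
move=> hi hj hd; rewrite /cfe mulrC.
have hv : Vz N F 1.
  move=> i' j' hi' hj' h1; have -> : j' = 0%N by lia.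
  by apply: (Fi0 N g hg0 hg).
exact: (Vz_pow N F (PP ^+ k) d hv i j hi hj hd).
Qed.

Lemma R0 k i j : cfe k.+1 0 i j =
  (if i is i'.+1 then cfe k 0 i' j else 0) + (if j is j'.+1 then cfe k 0 i j' else 0)
  + 2%:R * cfe k 1 i j.
Proof.
rewrite /cfe exprS !expr0 expr1 !mulr1.
have -> : PP * PP ^+ k = Yv * PP ^+ k + Zv * PP ^+ k + 2%:R * (PP ^+ k * F).
  by rewrite /PP; ring.
by rewrite !cz_add czYM czZM czNM.
Qed.

Lemma R1 k d i j : (i < N)%N -> (j < N)%N -> cfe k d.+1 i j =
  (if i is i'.+1 then cfe k d.+1 i' j else 0) + (if j is j'.+1 then cfe k d.+1 i j' else 0)
  + (if i is i'.+1 then if j is j'.+1 then cfe k d i' j' else 0 else 0)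
  + cfe k d.+2 i j.
Proof.
move=> hi hj.
have hQ := inIM N (PP ^+ k * F ^+ d) _ (inI_Qc N g hg).
have E : PP ^+ k * F ^+ d * Qc N g = PP ^+ k * F ^+ d.+1 -
   (Yv * (PP ^+ k * F ^+ d.+1) + Zv * (PP ^+ k * F ^+ d.+1)
    + Yv * (Zv * (PP ^+ k * F ^+ d)) + PP ^+ k * F ^+ d.+2).
  by rewrite /Qc !exprS; rewrite -/F; ring.
rewrite E in hQ; have := hQ i j hi hj.
rewrite cz_sub !cz_add !czYM !czZM => /eqP; rewrite subr_eq0 => /eqP.
rewrite /cfe => ->.
by case: i {hi hQ} => [|i]; case: j {hj} => [|j] //=; rewrite ?czZM.
Qed.

Lemma main_ind m : (m < N)%N -> forall r s k, (r <= m)%N -> (s <= m)%N ->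
  ((cc m r s k)%:R : rat) = cf m r s k.
Proof.
elim: m => [|m IH] hm r s k hr hs.
  have -> : r = 0%N by lia.
  have -> : s = 0%N by lia.
  rewrite cc0 cf_ge // subnn.
  case: k => [|k].
    by rewrite /cfe !expr0 mulr1 cz1E.
  by rewrite R0 cfe_y // mulr0 !addr0.
wlog hsr : r s hr hs / (s <= r)%N.
  move=> W; case: (leqP s r) => h; first exact: W.
  by rewrite cc_sym cf_sym; apply: W => //; exact: ltnW.
have hm' : (m < N)%N by lia.
have T : forall a b kk, (a <= m)%N -> (b <= a)%N ->
    ((cc m a b kk)%:R : rat) = cfe kk (a - b)%N a (m - b)%N.
  by move=> a b kk ha hb; rewrite IH ?cf_ge //; lia.
rewrite cc_rec' cf_ge //.
case: (eqVneq r s) => [<-{s hsr hs}|hrs].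
  rewrite subnn /=.
  case: k => [|k].
    rewrite /cfe !expr0 mulr1 cz1E.
    have -> : ((r == 0) && (m.+1 - r == 0))%N = false.
      by apply/negbTE/andP => -[/eqP h1 /eqP h2]; lia.
    by [].
  rewrite subn1 /= !natrD R0.
  case: r hr => [|r] hr.
    rewrite /= !add0r !subn0 T // !subn0 (cfe_y _ 1 0 m.+1); try lia.
    by rewrite mulr0 addr0.
  rewrite !ltn0Sn /=.
  case: (ltnP r.+1 m.+1) => hrm.
    have e : (m.+1 - r.+1 = (m - r.+1).+1)%N by lia.
    rewrite e.
    have t1 : ((cc m r r k)%:R : rat) = cfe k 0 r (m - r.+1)%N.+1.
      by rewrite T //; apply: cfeE; lia.
    have t2 : ((cc m r r.+1 k)%:R : rat) = cfe k 1 r.+1 (m - r.+1)%N.+1.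
      by rewrite cc_sym T //; apply: cfeE; lia.
    have t3 : ((cc m r.+1 r k)%:R : rat) = cfe k 1 r.+1 (m - r.+1)%N.+1.
      by rewrite T //; apply: cfeE; lia.
    have t4 : ((cc m r.+1 r.+1 k)%:R : rat) = cfe k 0 r.+1 (m - r.+1)%N.
      by rewrite T //; apply: cfeE; lia.
    rewrite t1 t2 t3 t4; ring.
  have er : r = m by lia.
  subst r.
  rewrite subnn /= (cc_sym m m m.+1) !(cc_gt m m.+1) // !addr0.
  rewrite (cfe_z _ 1 m.+1 0); try lia.
  rewrite mulr0 !addr0 T //; apply: cfeE; lia.
rewrite /= subn0.
have hsr' : (s < r)%N by rewrite ltn_neqAle eq_sym hrs.
case: r hr hsr hrs hsr' => [|r] hr hsr hrs hsr'; first by [].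
have e1 : (r.+1 - s = (r - s).+1)%N by lia.
have e2 : (m.+1 - s = (m - s).+1)%N by lia.
rewrite e1 e2 R1; try lia.
have t2 : ((cc m r s k)%:R : rat) = cfe k (r - s)%N r (m - s)%N.
  by rewrite T //; lia.
have t4 : ((cc m r.+1 s k)%:R : rat) = cfe k (r - s)%N.+1 r.+1 (m - s)%N.
  case: (ltnP r.+1 m.+1) => hrm.
    by rewrite T //; apply: cfeE; lia.
  by rewrite cc_gt ?cfe_z //; lia.
rewrite ltn0Sn /= !natrD t2 t4.
case: s hs hsr hrs hsr' e1 e2 t2 t4 => [|s] hs hsr hrs hsr' e1 e2 t2 t4.
  rewrite ltnn /= (cfe_y _ (r - 0).+1 r); try lia.
  rewrite (cfe_y _ (r - 0).+2 r.+1); try lia.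
  ring.
rewrite ltn0Sn /=.
have t1 : ((cc m r s k)%:R : rat) = cfe k (r - s.+1)%N.+1 r (m - s.+1)%N.+1.
  by rewrite T //; try lia; apply: cfeE; lia.
have t3 : ((cc m r.+1 s k)%:R : rat) = cfe k (r - s.+1)%N.+2 r.+1 (m - s.+1)%N.+1.
  case: (ltnP r.+1 m.+1) => hrm.
    by rewrite T //; try lia; apply: cfeE; lia.
  by rewrite cc_gt ?cfe_z //; lia.
rewrite t1 t3; ring.
Qed.

Lemma pow_cz mm i j : (i < N)%N -> (j < N)%N ->
  fps_pow (fps_add (fps_add fps_y fps_z)
     (fps_scale 2 (fps_scale (1 / 2) (fps_sub fps_L g)))) mm i j = cz (PP ^+ mm) i j.
Proof.
elim: mm i j => [|mm IH] i j hi hj.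
  by rewrite expr0 cz1.
rewrite exprS cz_mul /=; apply: fps_mul_ext => p q hp hq; split; last first.
  by apply: IH; lia.
rewrite /PP !cz_add czY czZ czNM /F /FF cz_tr //; try lia.
Qed.
End Main.

Theorem mainTheorem3 (g : fps)
  (hg0 : g 0%N 0%N = 1)
  (hg : forall i j, fps_mul g g i j = fps_disc i j) :
  let f : fps := fps_scale (1 / 2) (fps_sub fps_L g) in
  forall n r k : nat, (1 <= n)%N -> (r <= n)%N ->
    (Nk k n r)%:R =
      fps_pow (fps_add (fps_add fps_y fps_z) (fps_scale 2 f)) k.+1 r (n - r)%N.
Proof.
move=> f n r k hn hrn.
rewrite Nk_cc // (main_ind n.+1 g hg0 hg n (ltnSn n) r r k.+1 hrn hrn) cf_ge // subnn.
rewrite /f (pow_cz n.+1); try lia.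
by rewrite /cfe expr0 mulr1.
Qed.
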